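(* Let $0\le m\le n$, $x=(x_1,\dots,x_m)$, $y=(y_1,\dots,y_n)$. Then \[\omega(x,y;t)=t^{m(m-n)}(1-t)^m\sum_{\substack{l_1,\dots,l_m=1\\ l_i\ne l_j\ (i\ne j)}}^n\prod_{i=1}^m\frac{y_{l_i}}{x_i-ty_{l_i}}\prod_{\substack{i=1\\ i\ne l_1,\dots,l_m}}^n\prod_{j=1}^m\frac{y_i-ty_{l_j}}{y_i-y_{l_j}}\prod_{1\le i<j\le m}\frac{x_i-y_{l_j}}{x_i-ty_{l_j}}\cdot\frac{y_{l_i}-ty_{l_j}}{y_{l_i}-y_{l_j}}.\]
   Context: For $x=(x_1,\dots,x_m)$ and $y=(y_1,\dots,y_n)$, \[\omega(x,y;t)=\sum_{I\subseteq\{1,\dots,m\}}(-1)^{|I|}t^{\binom{|I|}{2}}\prod_{i\in I,\ j\in\{1,\dots,m\}\setminus I}\frac{x_i-tx_j}{x_i-x_j}\prod_{i\in I}\prod_{j=1}^n\frac{x_i-y_j}{x_i-ty_j}\] (a rational function; $\omega=1$ when $m=0$). *)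

(* Defs.v *)
From HB Require Import structures.
From mathcomp Require Import all_boot all_order all_algebra.
Set Implicit Arguments. Unset Strict Implicit. Unset Printing Implicit Defensive.
Import Order.TTheory GRing.Theory Num.Theory.
Local Open Scope ring_scope.

Definition omega (F : fieldType) (m n : nat) (x : 'I_m -> F) (y : 'I_n -> F)
    (t : F) : F :=
  \sum_(I : {set 'I_m})
    (-1) ^+ #|I| * t ^+ 'C(#|I|, 2)
    * (\prod_(i in I) \prod_(j in ~: I) ((x i - t * x j) / (x i - x j)))
    * (\prod_(i in I) \prod_(j < n) ((x i - y j) / (x i - t * y j))).

(* Main.v *)
Require Import Defs.
From HB Require Import structures.
From mathcomp Require Import all_boot all_order all_algebra.
From mathcomp Require Import ring zify.
Import Order.TTheory GRing.Theory Num.Theory.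
Local Open Scope ring_scope.

Set Implicit Arguments. Unset Strict Implicit. Unset Printing Implicit Defensive.


Lemma SR1 (F : fieldType) (s r : seq F) : uniq s -> size s = (size r).+1 ->
  \sum_(a <- s) (\prod_(b <- r) (a - b)) / \prod_(b <- s | b != a) (a - b) = 1.
Proof.
move=> us ssz.
pose P := \prod_(b <- r) ('X - b%:P).
pose Q a := \prod_(b <- s | b != a) ('X - b%:P).
pose c a := P.[a] / \prod_(b <- s | b != a) (a - b).
pose L := \sum_(a <- s) c a *: Q a.
have sizeQ a : a \in s -> size (Q a) = size s.
  move=> ain; rewrite /Q -big_filter size_prod_XsubC -rem_filter // size_rem //.
  by rewrite ssz.
have Qmon a : Q a \is monic by apply: monic_prod_XsubC.
have Qa a : a \in s -> (Q a).[a] = \prod_(b <- s | b != a) (a - b).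
  by move=> _; rewrite /Q horner_prod; apply: eq_bigr => b _; rewrite hornerXsubC.
have Qnz a : \prod_(b <- s | b != a) (a - b) != 0.
  rewrite prodf_seq_neq0; apply/allP => b _; apply/implyP => ba.
  by rewrite subr_eq0 eq_sym.
have Qb a b : a \in s -> b \in s -> a != b -> (Q a).[b] = 0.
  move=> ain bin ab; rewrite /Q horner_prod; apply/eqP; rewrite prodf_seq_eq0.
  by apply/hasP; exists b => //; rewrite eq_sym ab hornerXsubC subrr eqxx.
have LP : L = P.
  apply/eqP; rewrite -subr_eq0; apply/negPn/negP => nz.
  have rts : all (root (L - P)) s.
    apply/allP => b bin; rewrite /root hornerD hornerN /L horner_sum.
    rewrite (bigD1_seq b) //= big1_seq ?addr0.
      by rewrite hornerZ Qa // /c divfK // subrr.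
    move=> a /andP[ab ain]; rewrite hornerZ Qb ?mulr0 //.
  have := max_poly_roots nz rts us.
  have : (size (L - P)%R <= size s)%N.
    apply: leq_trans (size_polyD _ _) _; rewrite geq_max; apply/andP; split.
      rewrite /L big_seq; apply: (big_ind (fun p : {poly F} => size p <= size s)%N).
      - by rewrite size_poly0.
      - by move=> p q hp hq; apply: leq_trans (size_polyD _ _) _; rewrite geq_max hp hq.
      by move=> a ain; apply: leq_trans (size_scale_leq _ _) _; rewrite sizeQ.
    by rewrite size_polyN /P size_prod_XsubC ssz.
  by move=> h1 h2; have := leq_trans h2 h1; rewrite ltnn.
have : L`_(size r) = P`_(size r) by rewrite LP.
have -> : P`_(size r) = 1.
  have := monic_prod_XsubC r predT id; rewrite /P => /monicP.
  by rewrite lead_coefE size_prod_XsubC.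
rewrite /L coef_sum => h; apply: (etrans _ h); apply: eq_big_seq => a ain; rewrite coefZ.
have := Qmon a => /monicP; rewrite lead_coefE sizeQ // ssz /= => ->.
rewrite mulr1 /c /P horner_prod.
by under [in RHS]eq_bigr => b _ do rewrite hornerXsubC.
Qed.


Section SB.
Variable F : fieldType.
Variable t : F.
Hypothesis t0 : t != 0.

Lemma prod_div (I : finType) (P : pred I) (f g : I -> F) :
  \prod_(i | P i) f i / \prod_(i | P i) g i = \prod_(i | P i) (f i / g i).
Proof. by rewrite -prodfV -big_split. Qed.

Lemma PF1 m (x : 'I_m -> F) u (J : {set 'I_m}) : injective x -> (forall i, u != x i) ->
 \prod_(i in J) ((x i - t * u) / (x i - u)) - t ^+ #|J| =
 - ((1 - t) * \sum_(j in J) (x j / (u - x j) *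
       \prod_(i in J | i != j) ((x i - t * x j) / (x i - x j)))).
Proof.
move=> xi ux.
have us : uniq (t * u :: [seq t * x j | j in J]).
  rewrite /= map_inj_uniq ?enum_uniq ?andbT; last by move=> a b /(mulfI t0) /xi.
  apply/mapP => -[j _ /(mulfI t0) e]; by have := ux j; rewrite e eqxx.
have sz : size (t * u :: [seq t * x j | j in J]) = (size [seq x j | j in J]).+1.
  by rewrite /= !size_map.
have := SR1 us sz.
rewrite big_cons big_cons eqxx /= !big_map !big_enum /=.
have -> : \prod_(j <- enum J | t * x j != t * u) (t * u - t * x j)
        = \prod_(j in J) (t * u - t * x j).
  rewrite big_enum_cond; apply: eq_bigl => j.
  by rewrite (inj_eq (mulfI t0)) eq_sym ux andbT.
have E1 : \prod_(i in J) (t * u - x i) / \prod_(j in J) (t * u - t * x j)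
    = (t ^+ #|J|)^-1 * \prod_(i in J) ((x i - t * u) / (x i - u)).
  rewrite prod_div -prodr_const -prodfV -big_split; apply: eq_bigr => i _ /=.
  have := ux i; rewrite -subr_eq0 => h.
  have hh := ux i; have hh2 : x i != u by rewrite eq_sym.
  by field; rewrite -mulrBr mulf_eq0 negb_or t0 !subr_eq0 hh hh2.
have E2 j : j \in J -> \prod_(b <- [seq x j | j in J]) (t * x j - b) /
    \prod_(b <- t * u :: [seq t * x j | j in J] | b != t * x j) (t * x j - b)
  = (t ^+ #|J|)^-1 * ((1 - t) * (x j / (u - x j) *
       \prod_(i in J | i != j) ((x i - t * x j) / (x i - x j)))).
  move=> jJ.
  rewrite big_cons ifT; last by rewrite (inj_eq (mulfI t0)) ux.
  rewrite !big_map big_enum big_enum_cond (bigD1 j) //=.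
  rewrite (eq_bigl (fun i => (i \in J) && (i != j)) (fun i => t * x j - t * x i)); last first.
    by move=> i; rewrite (inj_eq (mulfI t0)) (inj_eq xi).
  rewrite -prodr_const [in RHS](bigD1 j) //= invfM mulrACA prod_div invfM.
  have -> : \prod_(i in J | i != j) ((t * x j - x i) / (t * x j - t * x i))
     = (\prod_(i in J | i != j) t)^-1 * \prod_(i in J | i != j) ((x i - t * x j) / (x i - x j)).
    rewrite -prodfV -big_split; apply: eq_bigr => i /andP[iJ ij] /=.
    have hh : x i != x j by rewrite (inj_eq xi).
    by field; rewrite -mulrBr mulf_eq0 negb_or t0 !subr_eq0 hh eq_sym hh.
  have P1nz : \prod_(i in J | i != j) t != 0 by apply/prodf_neq0.
  move: (\prod_(i in J | i != j) t) P1nz (\prod_(i in J | i != j) ((x i - t * x j) / (x i - x j))) => P1 P1nz P2.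
  have hh := ux j; have hh2 : x j != u by rewrite eq_sym.
  by field; rewrite -mulrBr mulf_eq0 negb_or t0 P1nz !subr_eq0 hh hh2.
rewrite E1 (eq_bigr _ E2) -mulr_sumr -mulr_sumr.
have Tnz : t ^+ #|J| != 0 by rewrite expf_neq0.
move: (t ^+ #|J|) Tnz (\prod_(i in J) _) (\sum_(i in J) _) => T Tnz P S h.
have h2 : P + (1 - t) * S = T.
  by move/(congr1 (fun z => T * z)): h; rewrite mulr1 => <-; field.
by rewrite -h2; ring.
Qed.
End SB.


Section SC.
Variable F : fieldType.
Variable t : F.
Hypothesis t0 : t != 0.

Definition Bf N (y : 'I_N -> F) v := \prod_(j < N) ((v - y j) / (v - t * y j)).

Lemma R1 N m (y : 'I_N -> F) (x : 'I_m -> F) u (W : {set 'I_m}) :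
  injective y -> injective x -> (forall w, u != x w) -> (forall k, u != t * y k) ->
  (forall w k, x w != t * y k) ->
  t ^+ (#|W|.+1) * ((1 - t) * \sum_(k < N) (y k / (u - t * y k)
      * \prod_(i < N | i != k) ((y i - t * y k) / (y i - y k))
      * \prod_(w in W) ((x w - y k) / (x w - t * y k))))
 = t ^+ N * (1 - Bf y u * \prod_(w in W) ((u - t * x w) / (u - x w))
     + (1 - t) * \sum_(w in W) (x w / (u - x w) * Bf y (x w)
          * \prod_(w' in W | w' != w) ((x w - t * x w') / (x w - x w')))).
Proof.
move=> yi xi ux uy xy.
set s1 := [seq t * y k | k <- index_enum 'I_N].
set s2 := [seq x w | w in W].
have us : uniq (s1 ++ u :: s2).
  rewrite cat_uniq /= map_inj_uniq ?index_enum_uniq; last by move=> a b /(mulfI t0) /yi.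
  rewrite map_inj_uniq ?enum_uniq //= andbT.
  rewrite negb_or; apply/andP; split; first apply/andP; first split.
  - by apply/mapP => -[k _ e]; move: (uy k); rewrite e eqxx.
  - by apply/hasP => -[b /mapP[w _ ->]] /mapP[k _ e]; move: (xy w k); rewrite e eqxx.
  - by apply/mapP => -[w _ e]; move: (ux w); rewrite e eqxx.
have sz : size (s1 ++ u :: s2) = (size ([seq y k | k <- index_enum 'I_N] ++ [seq t * x w | w in W])).+1.
  by rewrite /s1 /s2 !size_cat /= !size_map addnS.
have := SR1 us sz.
have N1 a : \prod_(b <- [seq y k | k <- index_enum 'I_N] ++ [seq t * x w | w in W]) (a - b)
    = \prod_(i < N) (a - y i) * \prod_(w in W) (a - t * x w).
  by rewrite big_cat !big_map big_enum.
have Ek : \sum_(i <- s1)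
    \prod_(b <- [seq y k | k <- index_enum 'I_N] ++ [seq t * x w | w in W]) (i - b) /
    \prod_(b <- s1 ++ u :: s2 | b != i) (i - b)
  = (\prod_(i < N) t)^-1 * (t * \prod_(w in W) t) * ((1 - t) * \sum_(k < N) (y k / (u - t * y k)
      * \prod_(i < N | i != k) ((y i - t * y k) / (y i - y k))
      * \prod_(w in W) ((x w - y k) / (x w - t * y k)))).
  rewrite big_map !mulr_sumr; apply: eq_bigr => k _.
  rewrite N1 (bigD1 k) //=.
  have D1 : \prod_(b <- s1 ++ u :: s2 | b != t * y k) (t * y k - b) =
     \prod_(i < N | i != k) (t * y k - t * y i) * ((t * y k - u) * \prod_(w in W) (t * y k - x w)).
    rewrite big_cat big_cons ifT; last exact: uy.
    rewrite !big_map big_enum_cond /=; congr (_ * (_ * _)).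
      by apply: eq_bigl => i; rewrite (inj_eq (mulfI t0)) (inj_eq yi).
    by apply: eq_bigl => w; rewrite xy andbT.
  rewrite D1 [\prod_(i < N) t](bigD1 k) //=.
  set P1 := \prod_(i < N | i != k) (t * y k - y i).
  set Q1 := \prod_(i < N | i != k) (t * y k - t * y i).
  set R1 := \prod_(i < N | i != k) ((y i - t * y k) / (y i - y k)).
  set Tk := \prod_(i < N | i != k) t.
  set P2 := \prod_(w in W) (t * y k - t * x w).
  set Q2 := \prod_(w in W) (t * y k - x w).
  set R2 := \prod_(w in W) ((x w - y k) / (x w - t * y k)).
  set Tw := \prod_(w in W) t.
  have Q1nz : Q1 != 0.
    apply/prodf_neq0 => i ik; rewrite -mulrBr mulf_eq0 negb_or t0 subr_eq0 (inj_eq yi).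
    by rewrite eq_sym.
  have Q2nz : Q2 != 0.
    by apply/prodf_neq0 => w _; rewrite subr_eq0 eq_sym xy.
  have Tknz : Tk != 0 by apply/prodf_neq0.
  have eP1 : P1 = Tk^-1 * R1 * Q1.
    rewrite /P1 /Tk /R1 /Q1 -prodfV -!big_split; apply: eq_bigr => i ik /=.
    have h1 : y i != y k by rewrite (inj_eq yi).
    by field; rewrite t0 subr_eq0 h1.
  have eP2 : P2 = Tw * R2 * Q2.
    rewrite /P2 /Tw /R2 /Q2 -!big_split; apply: eq_bigr => w _ /=.
    have h1 := xy w k.
    by field; rewrite !subr_eq0 h1.
  rewrite eP1 eP2.
  move: P1 Q1 R1 Tk P2 Q2 R2 Tw Q1nz Q2nz Tknz eP1 eP2 => _ Q1 R1 Tk _ Q2 R2 Tw Q1nz Q2nz Tknz _ _.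
  have h1 := uy k.
  by field; rewrite t0 Q1nz Q2nz Tknz !subr_eq0 h1 eq_sym h1.
have Eu : \prod_(b <- [seq y k | k <- index_enum 'I_N] ++ [seq t * x w | w in W]) (u - b) /
    \prod_(b <- s1 ++ u :: s2 | b != u) (u - b)
    = Bf y u * \prod_(w in W) ((u - t * x w) / (u - x w)).
  rewrite N1 big_cat big_cons eqxx /= !big_map big_enum_cond.
  rewrite (eq_bigl (fun _ => true) (fun i => u - t * y i)); last first.
    by move=> i; rewrite eq_sym uy.
  rewrite (eq_bigl (fun w => w \in W) (fun w => u - x w)); last first.
    by move=> w; rewrite eq_sym ux andbT.
  by rewrite invfM mulrACA /Bf !prod_div.
have Ew : \sum_(j <- s2)
     \prod_(b <- [seq y k | k <- index_enum 'I_N] ++ [seq t * x w | w in W]) (j - b) /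
     \prod_(b <- s1 ++ u :: s2 | b != j) (j - b)
   = - ((1 - t) * \sum_(w in W) (x w / (u - x w) * Bf y (x w)
          * \prod_(w' in W | w' != w) ((x w - t * x w') / (x w - x w')))).
  rewrite big_map big_enum mulr_sumr -sumrN; apply: eq_bigr => w wW.
  rewrite N1 (bigD1 w wW) /= big_cat big_cons ifT; last by rewrite ux.
  rewrite !big_map big_enum_cond.
  rewrite (eq_bigl (fun _ => true) (fun i => x w - t * y i)); last first.
    by move=> i; rewrite eq_sym xy.
  rewrite (eq_bigl (fun w' => (w' \in W) && (w' != w)) (fun w' => x w - x w')); last first.
    by move=> wp; rewrite (inj_eq xi).
  have -> : \prod_(i < N) (x w - y i) = Bf y (x w) * \prod_(i < N) (x w - t * y i).
    rewrite /Bf -big_split; apply: eq_bigr => i _ /=.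
    have h1 := xy w i; by field; rewrite subr_eq0 h1.
  have -> : \prod_(j in W | j != w) (x w - t * x j) =
     \prod_(j in W | j != w) ((x w - t * x j) / (x w - x j)) * \prod_(j in W | j != w) (x w - x j).
    rewrite -big_split; apply: eq_bigr => j /andP[_ jw] /=.
    have h1 : x w != x j by rewrite (inj_eq xi) eq_sym.
    by field; rewrite subr_eq0 h1.
  have Q1nz : \prod_(i < N) (x w - t * y i) != 0.
    by apply/prodf_neq0 => i _; rewrite subr_eq0 xy.
  have Q2nz : \prod_(j in W | j != w) (x w - x j) != 0.
    by apply/prodf_neq0 => j /andP[_ jw]; rewrite subr_eq0 (inj_eq xi) eq_sym.
  move: (\prod_(i < N) (x w - t * y i)) (\prod_(j in W | j != w) (x w - x j)) Q1nz Q2nz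
      (Bf y (x w)) (\prod_(j in W | j != w) ((x w - t * x j) / (x w - x j))) => Q1 Q2 Q1nz Q2nz B R.
  have h1 := ux w.
  by simpl; field; rewrite Q1nz Q2nz !subr_eq0 h1 eq_sym h1.
rewrite big_cat big_cons /= Ek Eu Ew !prodr_const card_ord.
have TN : t ^+ N != 0 by rewrite expf_neq0.
set X := (1 - t) * \sum_(k < N) _.
set A := Bf y u * _.
set S := (1 - t) * \sum_(w in W) _.
move=> h.
have h2 : 1 - A + S = (t ^+ N)^-1 * (t * t ^+ #|W|) * X.
  by apply/eqP; rewrite -subr_eq0 -h; apply/eqP; ring.
by rewrite h2 exprS; field.
Qed.
End SC.


Section SD.
Variable F : fieldType.
Variable t : F.

Definition Gs m (x : 'I_m -> F) (J : {set 'I_m}) :=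
  \prod_(i in J) \prod_(j in ~: J) ((x i - t * x j) / (x i - x j)).
Definition cc m (x : 'I_m -> F) (g : 'I_m -> F) (J : {set 'I_m}) :=
  (-1) ^+ #|J| * t ^+ 'C(#|J|, 2) * Gs x J * \prod_(i in J) g i.

Lemma setU1D1_eq (T : finType) (w : T) (J : {set T}) : ((w |: J) :\ w == J) = (w \notin J).
Proof.
case: (boolP (w \in J)) => wJ /=; last by rewrite setU1K // eqxx.
apply/negP => /eqP e; have : w \in (w |: J) :\ w by rewrite e.
by rewrite !inE eqxx.
Qed.

Lemma CL m (x g h : 'I_m -> F) :
  \sum_(J : {set 'I_m}) cc x g J * (t ^+ #|J| * \sum_(w in ~: J) (h w * g w *
      \prod_(w' in ~: J | w' != w) ((x w - t * x w') / (x w - x w'))))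
  = - \sum_(K : {set 'I_m}) cc x g K * \sum_(j in K) (h j *
      \prod_(i in K | i != j) ((x i - t * x j) / (x i - x j))).
Proof.
under eq_bigr => J _ do rewrite mulr_sumr mulr_sumr big_mkcond /=.
rewrite exchange_big /=.
under [in RHS]eq_bigr => K _ do rewrite mulr_sumr big_mkcond /=.
rewrite [in RHS]exchange_big /= -sumrN; apply: eq_bigr => w _.
rewrite -!big_mkcond /= -sumrN.
rewrite [in RHS](reindex_onto (fun J => w |: J) (fun K => K :\ w)) /=; last first.
  move=> K wK; exact: setD1K.
apply: eq_big => J.
  by rewrite setU11 setU1D1_eq inE.
rewrite inE => wJ.
rewrite /cc /Gs cardsU1 wJ add1n exprS binS bin1 exprD big_setU1 //= big_setU1 //=.
have e1 : \prod_(i in w |: J | i != w) ((x i - t * x w) / (x i - x w))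
     = \prod_(i in J) ((x i - t * x w) / (x i - x w)).
  apply: eq_bigl => k; rewrite !inE; case: (eqVneq k w) => [->|kw] /=.
    by rewrite (negbTE wJ).
  by rewrite andbT.
have e2 : \prod_(w' in ~: J | w' != w) ((x w - t * x w') / (x w - x w'))
     = \prod_(w' in ~: (w |: J)) ((x w - t * x w') / (x w - x w')).
  by apply: eq_bigl => k; rewrite !inE negb_or andbC.
have e3 : \prod_(i in J) \prod_(j in ~: J) ((x i - t * x j) / (x i - x j)) =
     \prod_(i in J) ((x i - t * x w) / (x i - x w)) *
     \prod_(i in J) \prod_(j in ~: (w |: J)) ((x i - t * x j) / (x i - x j)).
  rewrite -big_split; apply: eq_bigr => k _ /=.
  rewrite (bigD1 w) /=; last by rewrite inE.
  by congr (_ * _); apply: eq_bigl => l; rewrite !inE negb_or andbC.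
rewrite e1 e2 e3.
ring.
Qed.
End SD.


Section SE.
Variable F : fieldType.

Definition wid m (j : 'I_m) : 'I_m.+1 := widen_ord (leqnSn m) j.
Lemma wid_inj m : injective (@wid m).
Proof. by move=> a b e; apply: val_inj; exact: (congr1 val e). Qed.
Lemma wid_neq_max m (j : 'I_m) : (wid j == ord_max) = false.
Proof. by apply/negbTE; rewrite -val_eqE /= neq_ltn ltn_ord. Qed.
Lemma wid_or_max m (i : 'I_m.+1) : i = ord_max \/ exists j, i = wid j.
Proof.
case: (ltnP i m) => h; first by right; exists (Ordinal h); apply: val_inj.
by left; apply: val_inj => /=; apply/eqP; rewrite eqn_leq h -ltnS ltn_ord.
Qed.

Definition Wset m (J : {set 'I_m}) : {set 'I_m.+1} := [set wid j | j in J].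
Definition Winv m (I : {set 'I_m.+1}) : {set 'I_m} := [set j | wid j \in I].

Lemma mem_Wset m (J : {set 'I_m}) j : (wid j \in Wset J) = (j \in J).
Proof. by rewrite mem_imset //; apply: wid_inj. Qed.
Lemma max_Wset m (J : {set 'I_m}) : (ord_max \in Wset J) = false.
Proof. by apply/negbTE/imsetP => -[j _ /eqP]; rewrite eq_sym wid_neq_max. Qed.
Lemma WinvK m (J : {set 'I_m}) : Winv (Wset J) = J.
Proof. by apply/setP => j; rewrite inE mem_Wset. Qed.

Lemma sum_set_recr m (G : {set 'I_m.+1} -> F) :
  \sum_I G I = \sum_(J : {set 'I_m}) (G (Wset J) + G (ord_max |: Wset J)).
Proof.
rewrite (bigID (fun I : {set 'I_m.+1} => ord_max \in I)) /= big_split /= addrC.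
congr (_ + _).
  rewrite (reindex_onto (@Wset m) (@Winv m)) /=.
    by apply: eq_bigl => J; rewrite max_Wset WinvK eqxx.
  move=> I mI; apply/setP => i; case: (wid_or_max i) => [->|[j ->]].
    by rewrite max_Wset (negbTE mI).
  by rewrite mem_Wset inE.
rewrite (reindex_onto (fun J => ord_max |: @Wset m J) (@Winv m)) /=.
  apply: eq_bigl => J; rewrite setU11 /=.
  have -> : Winv (ord_max |: Wset J) = J.
    by apply/setP => j; rewrite !inE wid_neq_max mem_Wset.
  by rewrite eqxx.
move=> I mI; apply/setP => i; case: (wid_or_max i) => [->|[j ->]].
  by rewrite setU11 mI.
by rewrite in_setU1 wid_neq_max /= mem_Wset inE.
Qed.
End SE.


Section SG.
Variable F : fieldType.
Variable t : F.

Lemma omega_cc m n (x : 'I_m -> F) (y : 'I_n -> F) :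
  omega x y t = \sum_(I : {set 'I_m}) cc t x (fun i => Bf t y (x i)) I.
Proof. by []. Qed.

Lemma prodCW m (H : 'I_m.+1 -> F) (J : {set 'I_m}) :
  \prod_(j in ~: Wset J) H j = H ord_max * \prod_(j in ~: J) H (wid j).
Proof.
rewrite big_mkcond big_ord_recr /= mulrC !inE max_Wset /= [in RHS]big_mkcond; congr (_ * _).
by apply: eq_bigr => j _; rewrite -/(wid j) !inE mem_Wset.
Qed.

Lemma prodCW1 m (H : 'I_m.+1 -> F) (J : {set 'I_m}) :
  \prod_(j in ~: (ord_max |: Wset J)) H j = \prod_(j in ~: J) H (wid j).
Proof.
rewrite big_mkcond big_ord_recr /= !inE eqxx /= mulr1 [in RHS]big_mkcond.
by apply: eq_bigr => j _; rewrite -/(wid j) !inE wid_neq_max mem_Wset.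
Qed.

Lemma prodW m (H : 'I_m.+1 -> F) (J : {set 'I_m}) :
  \prod_(j in Wset J) H j = \prod_(j in J) H (wid j).
Proof. by rewrite big_imset //; apply: in2W; apply: wid_inj. Qed.

Lemma omega_split m n (x : 'I_m.+1 -> F) (y : 'I_n -> F) :
  omega x y t = \sum_(J : {set 'I_m})
     cc t (fun i => x (wid i)) (fun i => Bf t y (x (wid i))) J *
     (\prod_(i in J) ((x (wid i) - t * x ord_max) / (x (wid i) - x ord_max))
      - t ^+ #|J| * Bf t y (x ord_max) *
        \prod_(w in ~: J) ((x ord_max - t * x (wid w)) / (x ord_max - x (wid w)))).
Proof.
rewrite omega_cc sum_set_recr; apply: eq_bigr => J _.
rewrite /cc /Gs cardsU1 max_Wset card_imset; last exact: wid_inj.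
rewrite big_setU1 ?max_Wset //= big_setU1 ?max_Wset //= !prodW prodCW1.
under eq_bigr => i _ do rewrite prodCW.
rewrite big_split /= add1n exprS binS bin1 exprD.
have -> : \prod_(j in J) \prod_(j0 in ~: (ord_max |: Wset J))
         ((x (wid j) - t * x j0) / (x (wid j) - x j0)) =
    \prod_(j in J) \prod_(j0 in ~: J) ((x (wid j) - t * x (wid j0)) / (x (wid j) - x (wid j0))).
  by apply: eq_bigr => i _; rewrite prodCW1.
ring.
Qed.
End SG.


Section SH.
Variable F : fieldType.
Variable t : F.
Hypothesis t0 : t != 0.

Lemma Bf_lift n (y : 'I_n.+1 -> F) k v :
  Bf t y v = (v - y k) / (v - t * y k) * Bf t (fun i => y (lift k i)) v.
Proof. by rewrite /Bf (bigD1_ord k) //=. Qed.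

Lemma cc_lift m n (x : 'I_m -> F) (y : 'I_n.+1 -> F) k (J : {set 'I_m}) :
  \prod_(i < m) ((x i - y k) / (x i - t * y k)) *
     cc t x (fun i => Bf t (fun j => y (lift k j)) (x i)) J
  = cc t x (fun i => Bf t y (x i)) J * \prod_(w in ~: J) ((x w - y k) / (x w - t * y k)).
Proof.
rewrite /cc (bigID (fun i => i \in J)) /=.
have -> : \prod_(i < m | i \notin J) ((x i - y k) / (x i - t * y k)) = \prod_(i in ~: J) ((x i - y k) / (x i - t * y k)).
  by apply: eq_bigl => i; rewrite inE.
have -> : \prod_(i in J) Bf t y (x i) =
   \prod_(i in J) ((x i - y k) / (x i - t * y k)) * \prod_(i in J) Bf t (fun j => y (lift k j)) (x i).
  by rewrite -big_split; apply: eq_bigr => i _; rewrite (Bf_lift _ k).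
ring.
Qed.

Lemma omega_rec m n (x : 'I_m.+1 -> F) (y : 'I_n.+1 -> F) :
  injective x -> injective y -> (forall i j, x i != t * y j) ->
  t ^+ n * omega x y t = t ^+ m * ((1 - t) * \sum_(k < n.+1) (y k / (x ord_max - t * y k)
     * \prod_(i < n.+1 | i != k) ((y i - t * y k) / (y i - y k))
     * \prod_(i < m) ((x (wid i) - y k) / (x (wid i) - t * y k))
     * omega (fun i => x (wid i)) (fun i => y (lift k i)) t)).
Proof.
move=> xi yi xy.
set x' := fun i => x (wid i).
set u := x ord_max.
have x'i : injective x' by move=> a b /xi /wid_inj.
have ux : forall w, u != x' w.
  by move=> w; rewrite /u /x' (inj_eq xi) eq_sym wid_neq_max.
have uy : forall k, u != t * y k by move=> k; apply: xy.
have x'y : forall w k, x' w != t * y k by move=> w k; apply: xy.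
have RHS1 : forall k, \prod_(i < m) ((x' i - y k) / (x' i - t * y k)) *
     omega x' (fun i => y (lift k i)) t =
   \sum_(J : {set 'I_m}) cc t x' (fun i => Bf t y (x' i)) J * \prod_(w in ~: J) ((x' w - y k) / (x' w - t * y k)).
  by move=> k; rewrite omega_cc mulr_sumr; apply: eq_bigr => J _; rewrite cc_lift.
have RHS2 : \sum_(k < n.+1) (y k / (u - t * y k)
     * \prod_(i < n.+1 | i != k) ((y i - t * y k) / (y i - y k))
     * \prod_(i < m) ((x' i - y k) / (x' i - t * y k))
     * omega x' (fun i => y (lift k i)) t)
   = \sum_(J : {set 'I_m}) cc t x' (fun i => Bf t y (x' i)) J *
       \sum_(k < n.+1) (y k / (u - t * y k)
         * \prod_(i < n.+1 | i != k) ((y i - t * y k) / (y i - y k))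
         * \prod_(w in ~: J) ((x' w - y k) / (x' w - t * y k))).
  under eq_bigr => k _ do rewrite -mulrA RHS1 mulr_sumr.
  rewrite exchange_big /=; apply: eq_bigr => J _; rewrite mulr_sumr.
  by apply: eq_bigr => k _; ring.
rewrite omega_split RHS2.
apply/eqP; rewrite -subr_eq0 [t ^+ n * _]mulr_sumr [(1 - t) * _]mulr_sumr [t ^+ m * _]mulr_sumr -sumrB.
rewrite (eq_bigr (fun J => - (t ^+ n * (1 - t)) *
   (cc t x' (fun i => Bf t y (x' i)) J *
     \sum_(j in J) (x' j / (u - x' j) * \prod_(i in J | i != j) ((x' i - t * x' j) / (x' i - x' j)))
   + cc t x' (fun i => Bf t y (x' i)) J * (t ^+ #|J| *
     \sum_(w in ~: J) (x' w / (u - x' w) * Bf t y (x' w) *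
        \prod_(w' in ~: J | w' != w) ((x' w - t * x' w') / (x' w - x' w'))))))).
  by rewrite -mulr_sumr big_split /= (CL t x' (fun i => Bf t y (x' i)) (fun i => x' i / (u - x' i))) addrN mulr0.
move=> J _.
rewrite -/u.
have -> : cc t (fun i => x (wid i)) (fun i => Bf t y (x (wid i))) J
   = cc t x' (fun i => Bf t y (x' i)) J by [].
have -> : \prod_(w in ~: J) ((u - t * x (wid w)) / (u - x (wid w)))
   = \prod_(w in ~: J) ((u - t * x' w) / (u - x' w)) by [].
have -> : \prod_(i in J) ((x (wid i) - t * u) / (x (wid i) - u))
   = \prod_(i in J) ((x' i - t * u) / (x' i - u)) by [].
have hP := @PF1 F t t0 m x' u J x'i ux.
have hR := @R1 F t t0 n.+1 m y x' u (~: J) yi x'i ux uy x'y.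
rewrite exprS [t ^+ n.+1]exprS -!mulrA in hR.
have {hR} hR := mulfI t0 hR.
have em : m = (#|J| + #|~: J|)%N by rewrite cardsC card_ord.
move: hP hR.
move: (\sum_(k < n.+1) _) (\sum_(j in J) _) (\sum_(w in ~: J) _) => Phi P S.
move: (\prod_(i in J) ((x' i - t * u) / (x' i - u))) => X.
move: (\prod_(w in ~: J) ((u - t * x' w) / (u - x' w))) => Y.
move: (cc t x' (fun i => Bf t y (x' i)) J) => C.
move=> hX hR.
have -> : t ^+ m * ((1 - t) * (C * Phi)) = t ^+ #|J| * C * (t ^+ #|~: J| * ((1 - t) * Phi)).
  by rewrite [in LHS]em exprD; ring.
rewrite hR.
have -> : X = t ^+ #|J| - (1 - t) * P by rewrite -[X](subrK (t ^+ #|J|)) hX; ring.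
ring.
Qed.
End SH.


Section SI.
Variable F : fieldType.
Variable t : F.

Definition Gt m N (x : 'I_m -> F) (y : 'I_N -> F) (l : {ffun 'I_m -> 'I_N}) :=
      (\prod_(i < m) (y (l i) / (x i - t * y (l i))))
       * (\prod_(i < N | i \notin codom l)
            \prod_(j < m) ((y i - t * y (l j)) / (y i - y (l j))))
       * (\prod_(i < m) \prod_(j < m | (i < j)%N)
            ((x i - y (l j)) / (x i - t * y (l j))
             * ((y (l i) - t * y (l j)) / (y (l i) - y (l j))))).

Definition ext m n (k : 'I_n.+1) (l : {ffun 'I_m -> 'I_n}) : {ffun 'I_m.+1 -> 'I_n.+1} :=
  [ffun i : 'I_m.+1 => if unlift ord_max i is Some j then lift k (l j) else k].

Lemma wid_lift m (j : 'I_m) : wid j = lift ord_max j.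
Proof. by apply: val_inj; rewrite /= /bump leqNgt ltn_ord. Qed.

Lemma ext_wid m n k (l : {ffun 'I_m -> 'I_n}) j : ext k l (wid j) = lift k (l j).
Proof. by rewrite ffunE wid_lift liftK. Qed.

Lemma ext_max m n k (l : {ffun 'I_m -> 'I_n}) : ext k l ord_max = k.
Proof. by rewrite ffunE unlift_none. Qed.

Lemma ext_inj m n k (l : {ffun 'I_m -> 'I_n}) : injectiveb (ext k l) = injectiveb l.
Proof.
apply/injectiveP/injectiveP => li.
  by move=> a b e; apply/wid_inj/li; rewrite !ext_wid e.
move=> a b; case: (wid_or_max a) => [->|[ja ->]]; case: (wid_or_max b) => [->|[jb ->]] //.
- by rewrite ext_max ext_wid => /eqP; rewrite (negbTE (neq_lift _ _)).
- by rewrite ext_max ext_wid => /eqP; rewrite eq_sym (negbTE (neq_lift _ _)).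
by rewrite !ext_wid => /lift_inj /li ->.
Qed.

Lemma ext_codom m n k (l : {ffun 'I_m -> 'I_n}) i :
  (lift k i \in codom (ext k l)) = (i \in codom l).
Proof.
apply/codomP/codomP => -[a e].
  case: (wid_or_max a) e => [->|[j ->]]; rewrite ?ext_max ?ext_wid.
    by move/eqP; rewrite eq_sym (negbTE (neq_lift _ _)).
  by move/lift_inj => ->; exists j.
by exists (wid a); rewrite ext_wid e.
Qed.

Lemma ext_codom_k m n k (l : {ffun 'I_m -> 'I_n}) : k \in codom (ext k l).
Proof. by apply/codomP; exists ord_max; rewrite ext_max. Qed.


Lemma prod_codom m n (l : {ffun 'I_m -> 'I_n}) (G : 'I_n -> F) : injective l ->
  \prod_(i < n | i \in codom l) G i = \prod_(j < m) G (l j).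
Proof.
move=> li; rewrite -big_uniq; last first.
  by rewrite codomE map_inj_uniq // enum_uniq.
by rewrite codomE big_map enumT.
Qed.

Lemma Gt_ext m n (x : 'I_m.+1 -> F) (y : 'I_n.+1 -> F) k (l : {ffun 'I_m -> 'I_n}) :
  injective l ->
  Gt x y (ext k l) = y k / (x ord_max - t * y k)
     * \prod_(i < n.+1 | i != k) ((y i - t * y k) / (y i - y k))
     * \prod_(i < m) ((x (wid i) - y k) / (x (wid i) - t * y k))
     * Gt (fun i => x (wid i)) (fun i => y (lift k i)) l.
Proof.
move=> li.
rewrite /Gt.
set H := fun a b => (y a - t * y b) / (y a - y b).
have P1 : \prod_(i < m.+1) (y (ext k l i) / (x i - t * y (ext k l i))) =
   \prod_(i < m) (y (lift k (l i)) / (x (wid i) - t * y (lift k (l i)))) * (y k / (x ord_max - t * y k)).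
  rewrite big_ord_recr /= ext_max; congr (_ * _).
  by apply: eq_bigr => i _; rewrite ext_wid.
have P2 : \prod_(i < n.+1 | i \notin codom (ext k l))
            \prod_(j < m.+1) ((y i - t * y (ext k l j)) / (y i - y (ext k l j))) =
   \prod_(i < n | i \notin codom l)
            \prod_(j < m) ((y (lift k i) - t * y (lift k (l j))) / (y (lift k i) - y (lift k (l j))))
   * \prod_(i < n | i \notin codom l) H (lift k i) k.
  rewrite big_mkcond (bigD1_ord k) //= ext_codom_k /= mul1r.
  rewrite -big_split [RHS]big_mkcond; apply: eq_bigr => i _ /=.
  rewrite ext_codom; case: (i \in codom l) => //=.
  by rewrite big_ord_recr /= ext_max; congr (_ * _); apply: eq_bigr => j _; rewrite ext_wid.
have P3 : \prod_(i < m.+1) \prod_(j < m.+1 | (i < j)%N)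
            ((x i - y (ext k l j)) / (x i - t * y (ext k l j))
             * ((y (ext k l i) - t * y (ext k l j)) / (y (ext k l i) - y (ext k l j)))) =
   \prod_(i < m) \prod_(j < m | (i < j)%N)
            ((x (wid i) - y (lift k (l j))) / (x (wid i) - t * y (lift k (l j)))
             * ((y (lift k (l i)) - t * y (lift k (l j))) / (y (lift k (l i)) - y (lift k (l j)))))
   * (\prod_(i < m) ((x (wid i) - y k) / (x (wid i) - t * y k)) * \prod_(i < m) H (lift k (l i)) k).
  rewrite big_ord_recr /= (@big_pred0 _ _ _ _ _ (fun j : 'I_m.+1 => (@ord_max m < j)%N)); last by move=> j; rewrite /= ltnNge -ltnS ltn_ord.
  rewrite mulr1 -!big_split; apply: eq_bigr => i _ /=.
  rewrite big_mkcond big_ord_recr /= ltn_ord -big_mkcond /= ext_max !ext_wid.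
  congr (_ * _); apply: eq_bigr => j _; rewrite !ext_wid //.
have Q : \prod_(i < n.+1 | i != k) ((y i - t * y k) / (y i - y k)) =
    \prod_(i < n | i \notin codom l) H (lift k i) k * \prod_(i < m) H (lift k (l i)) k.
  rewrite big_mkcond (bigD1_ord k) //= eqxx mul1r.
  rewrite (eq_bigr (fun i => H (lift k i) k)); last by move=> i _; rewrite eq_sym neq_lift.
  by rewrite (bigID (fun i => i \in codom l)) /= mulrC (prod_codom (fun i => H (lift k i) k) li).
rewrite P1 P2 P3 Q.
ring.
Qed.

Definition res m n (Hmn : (m <= n)%N) (k : 'I_n.+1) (L : {ffun 'I_m.+1 -> 'I_n.+1}) : {ffun 'I_m -> 'I_n} :=
  [ffun j => odflt (widen_ord Hmn j) (unlift k (L (wid j)))].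

Lemma Rsum_rec m n (x : 'I_m.+1 -> F) (y : 'I_n.+1 -> F) : (m <= n)%N ->
  \sum_(L : {ffun 'I_m.+1 -> 'I_n.+1} | injectiveb L) Gt x y L =
  \sum_(k < n.+1) (y k / (x ord_max - t * y k)
     * \prod_(i < n.+1 | i != k) ((y i - t * y k) / (y i - y k))
     * \prod_(i < m) ((x (wid i) - y k) / (x (wid i) - t * y k))
     * \sum_(l : {ffun 'I_m -> 'I_n} | injectiveb l) Gt (fun i => x (wid i)) (fun i => y (lift k i)) l).
Proof.
move=> Hmn.
rewrite (partition_big (fun L : {ffun 'I_m.+1 -> 'I_n.+1} => L ord_max) xpredT) //=.
apply: eq_bigr => k _.
rewrite (reindex_onto (ext k) (res Hmn k)) /=; last first.
  move=> L /andP[/injectiveP Li /eqP Lk]; apply/ffunP => i.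
  case: (wid_or_max i) => [->|[j ->]]; first by rewrite ext_max Lk.
  rewrite ext_wid ffunE; case: unliftP => [j' -> //|e].
  by move: (Li _ _ (etrans e (esym Lk))) => /eqP; rewrite wid_neq_max.
rewrite mulr_sumr; apply: eq_big => l.
  have -> : res Hmn k (ext k l) = l by apply/ffunP => j; rewrite ffunE ext_wid liftK.
  by rewrite ext_inj ext_max !eqxx !andbT.
by move=> /andP[/andP[]]; rewrite ext_inj => /injectiveP li _ _; rewrite Gt_ext.
Qed.
End SI.


Section SM.
Variable F : fieldType.
Variable t : F.
Hypothesis t0 : t != 0.

Lemma main_gen m : forall n (x : 'I_m -> F) (y : 'I_n -> F), (m <= n)%N ->
  injective x -> injective y -> (forall i j, x i != t * y j) ->
  omega x y t = t ^ (m%:Z * (m%:Z - n%:Z)) * (1 - t) ^+ m *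
    \sum_(l : {ffun 'I_m -> 'I_n} | injectiveb l) Gt t x y l.
Proof.
elim: m => [|m IH] n x y.
  move=> _ _ _ _.
  rewrite /omega (big_pred1 set0); last first.
    by move=> I; apply/esym/eqP/setP => -[].
  pose l0 : {ffun 'I_0 -> 'I_n} := [ffun i : 'I_0 => widen_ord (leq0n n) i].
  rewrite (big_pred1 l0); last first.
    move=> l; rewrite /=; have -> : l == l0 by apply/eqP/ffunP => -[].
    by apply/injectiveP => -[].
  rewrite cards0 !big_set0 /Gt !big_ord0 big1 ?mulr1 ?mul0r ?expr0z ?expr0 ?mulr1 ?mul1r //.
  by move=> i _; rewrite big_ord0.
case: n y => [|n] y Hmn xi yi xy; first by [].
have Hmn' : (m <= n)%N by [].
have hIH : forall k : 'I_n.+1, omega (fun i => x (wid i)) (fun i => y (lift k i)) t =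
    t ^ (m%:Z * (m%:Z - n%:Z)) * (1 - t) ^+ m *
    \sum_(l : {ffun 'I_m -> 'I_n} | injectiveb l) Gt t (fun i => x (wid i)) (fun i => y (lift k i)) l.
  move=> k; apply: IH => //.
  all: try by move=> a b /xi /wid_inj.
  all: try by move=> a b /yi /lift_inj.
  all: try by move=> i j; apply: xy.
apply: (mulfI (expf_neq0 n t0)).
rewrite (omega_rec t0 xi yi xy).
under eq_bigr => k _ do rewrite hIH.
set T := t ^ (m%:Z * (m%:Z - n%:Z)).
set R := \sum_(L : {ffun 'I_m.+1 -> 'I_n.+1} | injectiveb L) Gt t x y L.
have -> : \sum_(k < n.+1) (y k / (x ord_max - t * y k) *
       \prod_(i < n.+1 | i != k) ((y i - t * y k) / (y i - y k)) *
       \prod_(i < m) ((x (wid i) - y k) / (x (wid i) - t * y k)) *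
       (T * (1 - t) ^+ m *
        \sum_(l : {ffun 'I_m -> 'I_n} | injectiveb l) Gt t (fun i : 'I_m => x (wid i)) (fun i : 'I_n.+1.-1 => y (lift k i)) l))
    = T * (1 - t) ^+ m * R.
  by rewrite /R (Rsum_rec t x y Hmn') mulr_sumr; apply: eq_bigr => k _; ring.
have -> : t ^ (m.+1%:Z * (m.+1%:Z - n.+1%:Z)) = T * t ^+ m / t ^+ n.
  apply: (canRL (mulfK (expf_neq0 n t0))).
  by rewrite /T !exprnP -!expfzDr //; congr (_ ^ _); lia.
rewrite exprS; field.
by rewrite expf_neq0.
Qed.
End SM.


Unset Implicit Arguments. Set Strict Implicit. Set Printing Implicit Defensive.

Theorem corollary3p5 (F : fieldType) (m n : nat) (x : 'I_m -> F)
    (y : 'I_n -> F) (t : F) :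
  (m <= n)%N ->
  t != 0 ->
  injective x -> injective y ->
  (forall i j, x i != t * y j) ->
  omega x y t =
    t ^ (m%:Z * (m%:Z - n%:Z)) * (1 - t) ^+ m *
    \sum_(l : {ffun 'I_m -> 'I_n} | injectiveb l)
      ((\prod_(i < m) (y (l i) / (x i - t * y (l i))))
       * (\prod_(i < n | i \notin codom l)
            \prod_(j < m) ((y i - t * y (l j)) / (y i - y (l j))))
       * (\prod_(i < m) \prod_(j < m | (i < j)%N)
            ((x i - y (l j)) / (x i - t * y (l j))
             * ((y (l i) - t * y (l j)) / (y (l i) - y (l j)))))).
Proof.
move=> Hmn t0 xi yi xy.
exact: (@main_gen F t t0 m n x y Hmn xi yi xy).
Qed.
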